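(* Let $S$ be a monoid with zero and let $A_S$ be a semi-simple right $S$-act. The following are equivalent: (i) $A_S$ is Rees artinian; (ii) $A_S$ is finitely Rees cogenerated; (iii) $A_S$ is finitely generated; (iv) $A_S$ is Rees noetherian.
   Context: An $S$-act is $\theta$-simple if its only subacts are itself and a one-element subact. Over a monoid with zero, an $S$-act is semi-simple if it is a coproduct in the category $S$-Act$_0$ (acts with a distinguished zero; coproduct = union of the acts glued along their common zero) of $\theta$-simple acts; equivalently, each of its subacts is a $0$-direct summand. For a subact $B$, $\rho_B=(B\times B)\cup\Delta_A$. $A_S$ is finitely Rees cogenerated if whenever $\bigcap_{i\in I}\rho_{B_i}=\Delta_A$ for subacts $B_i$, already $\bigcap_{j\in J}\rho_{B_j}=\Delta_A$ for some finite $J\subseteq I$. Rees artinian (noetherian) means the descending (ascending) chain condition on subacts. *)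

(* Defs.v *)
From Stdlib Require Import List.
Import ListNotations.

Record monoid0 := Monoid0 {
  mcar :> Type;
  mmul : mcar -> mcar -> mcar;
  mone : mcar;
  mzero : mcar;
  mmulA : forall x y z, mmul x (mmul y z) = mmul (mmul x y) z;
  mmul1l : forall x, mmul mone x = x;
  mmulr1 : forall x, mmul x mone = x;
  mmul0l : forall x, mmul mzero x = mzero;
  mmulr0 : forall x, mmul x mzero = mzero
}.

Record ract0 (S : monoid0) := Ract0 {
  acar :> Type;
  act : acar -> S -> acar;
  atheta : acar;
  act1 : forall a, act a (mone S) = a;
  actA : forall a s t, act (act a s) t = act a (mmul S s t);
  act_theta : forall s, act atheta s = atheta
}.
Arguments act {S} _ _ _.
Arguments atheta {S} _.

Section Acts.
Variables (S : monoid0) (A : ract0 S).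

Definition subact (B : A -> Prop) : Prop :=
  (exists b, B b) /\ forall a s, B a -> B (act A a s).

Definition one_element (B : A -> Prop) : Prop :=
  exists b, forall x, B x <-> x = b.

Definition theta_simple (C : A -> Prop) : Prop :=
  subact C /\
  forall B, subact B -> (forall x, B x -> C x) ->
    (forall x, B x <-> C x) \/ one_element B.

(* A is (internally) the coproduct in S-Act_0 of theta-simple subacts:
   union of theta-simple subacts glued along their common zero. *)
Definition semisimple : Prop :=
  exists (I : Type) (C : I -> A -> Prop),
    (forall i, theta_simple (C i)) /\
    (forall i, C i (atheta A)) /\
    (forall a, exists i, C i a) /\
    (forall i j a, i <> j -> C i a -> C j a -> a = atheta A).

Definition rho (B : A -> Prop) (x y : A) : Prop := (B x /\ B y) \/ x = y.

Definition finitely_Rees_cogenerated : Prop :=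
  forall (I : Type) (B : I -> A -> Prop),
    (forall i, subact (B i)) ->
    (forall x y, (forall i, rho (B i) x y) -> x = y) ->
    exists J : list I, forall x y, (forall j, In j J -> rho (B j) x y) -> x = y.

Definition finitely_generated : Prop :=
  exists X : list A, forall a, exists x s, In x X /\ a = act A x s.

Definition Rees_artinian : Prop :=
  forall B : nat -> A -> Prop,
    (forall n, subact (B n)) ->
    (forall n x, B (Datatypes.S n) x -> B n x) ->
    exists n, forall m, n <= m -> forall x, B m x <-> B n x.

Definition Rees_noetherian : Prop :=
  forall B : nat -> A -> Prop,
    (forall n, subact (B n)) ->
    (forall n x, B n x -> B (Datatypes.S n) x) ->
    exists n, forall m, n <= m -> forall x, B m x <-> B n x.
End Acts.

(* Main.v *)
Require Import Defs.
From Stdlib Require Import List Classical ClassicalEpsilon Lia PeanoNat.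
Import ListNotations.

Lemma comp_gen (S : monoid0) (A : ract0 S) (C : A -> Prop) :
  theta_simple S A C -> C (atheta A) ->
  exists X : list A, forall a, C a ->
    exists x s s', In x X /\ a = act A x s /\ x = act A a s'.
Proof.
  intros [[_ Ccl] Hs] Cth.
  assert (Hcyc : forall a, C a -> (exists s, act A a s <> a) ->
            forall b, C b -> exists s, b = act A a s).
  { intros a Ca [s0 Hs0] b Cb.
    destruct (Hs (fun x => exists s, x = act A a s)) as [Heq|[c Hc]].
    - split. exists a, (mone S). symmetry; apply act1.
      intros x t [s ->]. exists (mmul S s t). apply actA.
    - intros x [s ->]. apply Ccl, Ca.
    - apply Heq; exact Cb.
    - exfalso. assert (a = c) by (apply Hc; exists (mone S); symmetry; apply act1).
      assert (act A a s0 = c) by (apply Hc; exists s0; reflexivity). congruence. }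
  assert (Hpair : forall b, C b -> (forall s, act A b s = b) -> b <> atheta A ->
            forall x, C x -> x = atheta A \/ x = b).
  { intros b Cb Fb Nb x Cx.
    destruct (Hs (fun x => x = atheta A \/ x = b)) as [Heq|[c Hc]].
    - split. exists b; right; reflexivity.
      intros y t [->| ->]. left; apply act_theta. right; apply Fb.
    - intros y [->| ->]; assumption.
    - apply Heq; exact Cx.
    - exfalso. assert (atheta A = c) by (apply Hc; left; reflexivity).
      assert (b = c) by (apply Hc; right; reflexivity). congruence. }
  destruct (classic (exists g, C g /\ exists s, act A g s <> g)) as [[g [Cg Ng]] | Hno].
  - exists [atheta A; g]. intros a Ca.
    destruct (classic (exists s, act A a s <> a)) as [Na|Fa].
    + destruct (Hcyc g Cg Ng a Ca) as [s Hs1]. destruct (Hcyc a Ca Na g Cg) as [s' Hs2].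
      exists g, s, s'. split. simpl; auto. auto.
    + assert (Fa' : forall s, act A a s = a).
      { intros s; apply NNPP; intro; apply Fa; exists s; auto. }
      destruct (classic (a = atheta A)) as [Ea|Na].
      * exists (atheta A), (mone S), (mone S). rewrite Ea, act1. repeat split; simpl; auto.
      * exfalso. destruct Ng as [s Hs'].
        destruct (Hpair a Ca Fa' Na g Cg) as [E|E]; rewrite E in Hs'; apply Hs'.
        apply act_theta. apply Fa'.
  - assert (Fall : forall g, C g -> forall s, act A g s = g).
    { intros g Cg s; apply NNPP; intro H; apply Hno; eauto. }
    destruct (classic (exists b, C b /\ b <> atheta A)) as [[b [Cb Nb]]|Hn].
    + exists [atheta A; b]. intros a Ca. exists a, (mone S), (mone S). rewrite act1.
      repeat split; auto.
      destruct (Hpair b Cb (Fall b Cb) Nb a Ca) as [-> | ->]; simpl; auto.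
    + exists [atheta A]. intros a Ca.
      assert (E : a = atheta A) by (apply NNPP; intro; apply Hn; eauto).
      exists (atheta A), (mone S), (mone S). rewrite E, act1. repeat split; simpl; auto.
Qed.

Definition cover (S : monoid0) (A : ract0 S) (I : Type) (C : I -> A -> Prop) :=
  exists L : list I, forall a, a = atheta A \/ exists i, In i L /\ C i a.

Lemma gen_of_cover (S : monoid0) (A : ract0 S) (I : Type) (C : I -> A -> Prop) :
  (forall i, theta_simple S A (C i)) -> (forall i, C i (atheta A)) ->
  cover S A I C ->
  exists X : list A, forall a, exists x s s', In x X /\ a = act A x s /\ x = act A a s'.
Proof.
  intros Hts Hth [L HL].
  assert (G : forall L, exists X : list A, forall a,
     (a = atheta A \/ exists i, In i L /\ C i a) ->
     exists x s s', In x X /\ a = act A x s /\ x = act A a s').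
  { induction L0 as [|i L0 IH].
    - exists [atheta A]. intros a [E|[i [[] _]]].
      exists (atheta A), (mone S), (mone S). rewrite E, act1. repeat split; simpl; auto.
    - destruct IH as [XL HXL]. destruct (comp_gen S A (C i) (Hts i) (Hth i)) as [Xi HXi].
      exists (Xi ++ XL). intros a [E|[j [[<-|Hj] Cj]]].
      + destruct (HXL a (or_introl E)) as [x [s [s' [H1 H2]]]].
        exists x, s, s'. split; auto. apply in_or_app; right; auto.
      + destruct (HXi a Cj) as [x [s [s' [H1 H2]]]].
        exists x, s, s'. split; auto. apply in_or_app; left; auto.
      + destruct (HXL a (or_intror (ex_intro _ j (conj Hj Cj)))) as [x [s [s' [H1 H2]]]].
        exists x, s, s'. split; auto. apply in_or_app; right; auto. }
  destruct (G L) as [X HX]. exists X. intro a. apply HX, HL.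
Qed.

Lemma equiv_gen (S : monoid0) (A : ract0 S) (B : A -> Prop) (a x : A) s s' :
  subact S A B -> a = act A x s -> x = act A a s' -> (B a <-> B x).
Proof.
  intros [_ HB] E1 E2. split; intro H.
  - rewrite E2; apply HB; auto.
  - rewrite E1; apply HB; auto.
Qed.

Lemma stab_list {A : Type} (B : nat -> A -> Prop) :
  (forall x, exists N, forall m, N <= m -> (B m x <-> B N x)) ->
  forall X : list A, exists N, forall m, N <= m -> forall x, In x X -> (B m x <-> B N x).
Proof.
  intros Hp X. induction X as [|y X IH].
  - exists 0. intros m _ x [].
  - destruct IH as [N1 H1]. destruct (Hp y) as [N2 H2].
    exists (Nat.max N1 N2). intros m Hm x [<-|Hx].
    + rewrite (H2 m ltac:(lia)). rewrite (H2 (Nat.max N1 N2) ltac:(lia)). tauto.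
    + rewrite (H1 m ltac:(lia) x Hx). rewrite (H1 (Nat.max N1 N2) ltac:(lia) x Hx). tauto.
Qed.

Lemma chain_from_gen (S : monoid0) (A : ract0 S) (X : list A) (B : nat -> A -> Prop) :
  (forall a, exists x s s', In x X /\ a = act A x s /\ x = act A a s') ->
  (forall n, subact S A (B n)) ->
  (forall x, exists N, forall m, N <= m -> (B m x <-> B N x)) ->
  exists n, forall m, n <= m -> forall x, B m x <-> B n x.
Proof.
  intros HX HB Hp. destruct (stab_list B Hp X) as [N HN]. exists N.
  intros m Hm a. destruct (HX a) as [x [s [s' [Hin [E1 E2]]]]].
  rewrite (equiv_gen S A (B m) a x s s' (HB m) E1 E2).
  rewrite (equiv_gen S A (B N) a x s s' (HB N) E1 E2). apply HN; auto.
Qed.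

Lemma traces {A0 : Type} (X : list A0) : forall (I : Type) (P : I -> A0 -> Prop),
  exists J : list I, forall i, exists j, In j J /\ forall x, In x X -> (P i x <-> P j x).
Proof.
  induction X as [|x X IH]; intros I P.
  - destruct (classic (inhabited I)) as [[i0]|NI].
    + exists [i0]. intro i. exists i0. split; [left; auto | intros x []].
    + exists []. intro i; exfalso; apply NI; constructor; exact i.
  - destruct (IH {i | P i x} (fun i => P (proj1_sig i))) as [J1 H1].
    destruct (IH {i | ~ P i x} (fun i => P (proj1_sig i))) as [J2 H2].
    exists (map (@proj1_sig _ _) J1 ++ map (@proj1_sig _ _) J2). intro i.
    destruct (classic (P i x)) as [Hp|Hn].
    + destruct (H1 (exist _ i Hp)) as [[j Hj] [Hin Hag]]. simpl in Hag. exists j. split.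
      * apply in_or_app; left. exact (in_map (@proj1_sig _ _) J1 (exist _ j Hj) Hin).
      * intros y [<-|Hy]. tauto. apply Hag; exact Hy.
    + destruct (H2 (exist _ i Hn)) as [[j Hj] [Hin Hag]]. simpl in Hag. exists j. split.
      * apply in_or_app; right. exact (in_map (@proj1_sig _ _) J2 (exist _ j Hj) Hin).
      * intros y [E|Hy]. subst y. simpl in Hj. split; intro HH; exfalso; [apply Hn|apply Hj]; exact HH. apply Hag; exact Hy.
Qed.

Fixpoint iterL {I : Type} (g : list I -> I) (n : nat) : list I :=
  match n with 0 => [] | Datatypes.S n => g (iterL g n) :: iterL g n end.

Lemma iterL_in {I : Type} (g : list I -> I) : forall k n, k < n -> In (g (iterL g k)) (iterL g n).
Proof.
  intros k n; induction n as [|n IH]; intros H; [lia|]. simpl.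
  destruct (Nat.eq_dec k n) as [->|Hne]. left; auto. right; apply IH; lia.
Qed.

Lemma build (S : monoid0) (A : ract0 S) (I : Type) (C : I -> A -> Prop) :
  (forall a, exists i, C i a) ->
  (forall i j a, i <> j -> C i a -> C j a -> a = atheta A) ->
  ~ cover S A I C ->
  exists (g : nat -> I) (a : nat -> A), (forall n, a n <> atheta A) /\
     (forall n, C (g n) (a n)) /\ (forall k n, C (g k) (a n) -> k = n).
Proof.
  intros Hcov Hdisj Hnc.
  assert (H : forall L : list I, exists p : I * A, snd p <> atheta A /\ C (fst p) (snd p) /\
            forall j, In j L -> ~ C j (snd p)).
  { intro L. apply NNPP; intro Hn. apply Hnc. exists L. intro a. apply NNPP; intro Ha.
    apply Hn. destruct (Hcov a) as [i Ci]. exists (i, a). simpl. split.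
    intro; apply Ha; left; auto. split; auto. intros j Hj Cj. apply Ha; right; eauto. }
  pose (f := fun L => proj1_sig (constructive_indefinite_description _ (H L))).
  assert (Hf : forall L, snd (f L) <> atheta A /\ C (fst (f L)) (snd (f L)) /\
            forall j, In j L -> ~ C j (snd (f L))).
  { intro L. exact (proj2_sig (constructive_indefinite_description _ (H L))). }
  pose (g0 := fun L => fst (f L)).
  exists (fun n => g0 (iterL g0 n)), (fun n => snd (f (iterL g0 n))).
  split; [intro n; apply Hf|]. split; [intro n; apply Hf|].
  intros k n Ck.
  destruct (Nat.lt_total k n) as [lt|[eq|gt]]; auto; exfalso.
  - apply (proj2 (proj2 (Hf (iterL g0 n))) _ (iterL_in g0 k n lt)). exact Ck.
  - destruct (classic (g0 (iterL g0 k) = g0 (iterL g0 n))) as [E|NE].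
    + apply (proj2 (proj2 (Hf (iterL g0 k))) _ (iterL_in g0 n k gt)).
      fold (g0 (iterL g0 n)). rewrite <- E. apply Hf.
    + apply (proj1 (Hf (iterL g0 n))).
      apply (Hdisj _ _ _ NE Ck). apply Hf.
Qed.

Lemma sum_le (J : list nat) : forall j, In j J -> j <= fold_right plus 0 J.
Proof. induction J as [|b J IHJ]; simpl; intros j H; [destruct H|]. destruct H as [H|H]; [subst; lia|]. specialize (IHJ j H); lia. Qed.

Theorem mainTheorem8 (S : monoid0) (A : ract0 S) :
  semisimple S A ->
  (Rees_artinian S A <-> finitely_Rees_cogenerated S A) /\
  (finitely_Rees_cogenerated S A <-> finitely_generated S A) /\
  (finitely_generated S A <-> Rees_noetherian S A).
Proof.
  intros [I [C [Hts [Hth [Hcov Hdisj]]]]].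
  assert (Ccl : forall i x s, C i x -> C i (act A x s)).
  { intros i x s H. destruct (Hts i) as [[_ Hc] _]. apply Hc, H. }
  assert (Pos : cover S A I C ->
     Rees_artinian S A /\ finitely_Rees_cogenerated S A /\
     finitely_generated S A /\ Rees_noetherian S A).
  { intro Hc. destruct (gen_of_cover S A I C Hts Hth Hc) as [X HX].
    split; [|split; [|split]].
    - intros B HB Hmono. apply (chain_from_gen S A X B HX HB). intro x.
      assert (Mono : forall n m, n <= m -> B m x -> B n x).
      { intros n m Hnm; induction Hnm; auto. }
      destruct (classic (forall n, B n x)) as [Hall|Hn].
      + exists 0. intros m _. split; auto.
      + apply not_all_ex_not in Hn. destruct Hn as [n0 Hn0]. exists n0. intros m Hm.
        split; intro H; [exfalso; apply Hn0; eauto | contradiction].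
    - intros J B HB Hd. destruct (traces X J B) as [L HL]. exists L.
      intros x y Hxy. apply Hd. intro i. destruct (HL i) as [j [Hj Hag]].
      destruct (Hxy j Hj) as [[Bx By]|E]; [left|right; auto].
      destruct (HX x) as [x0 [s [s' [Hx0 [E1 E2]]]]].
      destruct (HX y) as [y0 [t [t' [Hy0 [F1 F2]]]]].
      rewrite (equiv_gen S A (B i) x x0 s s' (HB i) E1 E2).
      rewrite (equiv_gen S A (B i) y y0 t t' (HB i) F1 F2).
      rewrite (equiv_gen S A (B j) x x0 s s' (HB j) E1 E2) in Bx.
      rewrite (equiv_gen S A (B j) y y0 t t' (HB j) F1 F2) in By.
      split; [apply Hag; auto | apply Hag; auto].
    - exists X. intro a. destruct (HX a) as [x [s [s' [H1 [H2 _]]]]]. eauto.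
    - intros B HB Hmono. apply (chain_from_gen S A X B HX HB). intro x.
      assert (Mono : forall n m, n <= m -> B n x -> B m x).
      { intros n m Hnm; induction Hnm; auto. }
      destruct (classic (exists n, B n x)) as [[n0 Hn0]|Hn].
      + exists n0. intros m Hm. split; eauto.
      + exists 0. intros m _. split; intro H; exfalso; apply Hn; eauto. }
  assert (NegT : ~ cover S A I C ->
     ~ Rees_artinian S A /\ ~ finitely_Rees_cogenerated S A /\ ~ Rees_noetherian S A).
  { intro Hnc. destruct (build S A I C Hcov Hdisj Hnc) as [g [a [Ha [Hga Hk]]]].
    pose (T := fun n x => x = atheta A \/ exists k, n <= k /\ C (g k) x).
    pose (H := fun n x => x = atheta A \/ exists k, k < n /\ C (g k) x).
    assert (Tsub : forall n, subact S A (T n)).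
    { intro n. split. exists (atheta A); left; auto.
      intros x s [E|[k [Hk' Ck]]]. left; rewrite E; apply act_theta.
      right; exists k; split; auto. }
    assert (Hsub : forall n, subact S A (H n)).
    { intro n. split. exists (atheta A); left; auto.
      intros x s [E|[k [Hk' Ck]]]. left; rewrite E; apply act_theta.
      right; exists k; split; auto. }
    split; [|split].
    - intro Hart. destruct (Hart T Tsub) as [N HN].
      { intros n x [E|[k [Hk' Ck]]]. left; auto. right; exists k; split; auto; lia. }
      assert (TN : T N (a N)) by (right; exists N; split; auto).
      apply (HN (Datatypes.S N) ltac:(lia)) in TN.
      destruct TN as [E|[k [Hk' Ck]]]. apply (Ha N E). apply Hk in Ck; lia.
    - intro Hf. destruct (Hf nat T Tsub) as [J HJ].
      { intros x y Hxy. apply NNPP; intro Nxy.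
        assert (Z : exists z, z <> atheta A /\ forall n, T n z).
        { destruct (classic (x = atheta A)) as [Ex|Nx].
          - exists y. split. intro Ey; apply Nxy; congruence.
            intro n. destruct (Hxy n) as [[_ Hy]|E]; [auto|contradiction].
          - exists x. split; auto. intro n. destruct (Hxy n) as [[Hx _]|E]; [auto|contradiction]. }
        destruct Z as [z [Nz Tz]].
        destruct (Tz 0) as [E|[k [_ Ck]]]; [contradiction|].
        destruct (Tz (Datatypes.S k)) as [E|[k' [Hk' Ck']]]; [contradiction|].
        assert (Ng : g k <> g k').
        { intro E. rewrite E in Ck.
          assert (Hk1 : C (g k) (a k)) by apply Hga. rewrite E in Hk1.
          apply Hk in Hk1. lia. }
        apply Nz. exact (Hdisj _ _ _ Ng Ck Ck'). }
      set (N := fold_right plus 0 J).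
      apply (Ha N). apply HJ. intros j Hj. left. split.
      + right. exists N. split. apply sum_le; auto. apply Hga.
      + left; auto.
    - intro Hn. destruct (Hn H Hsub) as [N HN].
      { intros n x [E|[k [Hk' Ck]]]. left; auto. right; exists k; split; auto; lia. }
      assert (HN1 : H (Datatypes.S N) (a N)) by (right; exists N; split; auto).
      apply (HN (Datatypes.S N) ltac:(lia)) in HN1.
      destruct HN1 as [E|[k [Hk' Ck]]]. apply (Ha N E). apply Hk in Ck; lia. }
  assert (FgC : finitely_generated S A -> cover S A I C).
  { intros [X HX].
    assert (G : forall X : list A, exists L : list I, forall x, In x X -> exists i, In i L /\ C i x).
    { induction X0 as [|x X0 IH]. exists []. intros x [].
      destruct IH as [L HL]. destruct (Hcov x) as [i Ci]. exists (i :: L).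
      intros y [<-|Hy]. exists i; split; simpl; auto.
      destruct (HL y Hy) as [j [Hj Cj]]. exists j; split; simpl; auto. }
    destruct (G X) as [L HL]. exists L. intro a. right.
    destruct (HX a) as [x [s [Hx ->]]]. destruct (HL x Hx) as [i [Hi Ci]]. eauto. }
  destruct (classic (cover S A I C)) as [Hc|Hc].
  - destruct (Pos Hc) as [P1 [P2 [P3 P4]]]. tauto.
  - destruct (NegT Hc) as [N1 [N2 N3]].
    assert (~ finitely_generated S A) by (intro; apply Hc; auto). tauto.
Qed.
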